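(* Let $A<\mathbb{R}$ be any subring. For any finite set $S\subseteq H(A)''$ there is a non-trivial element $h_S\in H(A)$ commuting with each element of $S$.
   Context: Let $\mathbb{P}^1=\mathbb{P}^1(\mathbb{R})$ with its usual topology (a circle) and the natural action of $\mathrm{PSL}_2(\mathbb{R})$. Let $G$ be the group of homeomorphisms of $\mathbb{P}^1$ which are piecewise in $\mathrm{PSL}_2(\mathbb{R})$ with finitely many pieces, each an interval. Let $\infty\in\mathbb{P}^1$ correspond to the first basis vector of $\mathbb{R}^2$ and $H<G$ its stabilizer. For a subring $A<\mathbb{R}$, $P_A$ is the set of fixed points of hyperbolic elements of $\mathrm{PSL}_2(A)$, $G(A)$ is the subgroup of $G$ of elements piecewise in $\mathrm{PSL}_2(A)$ with all interval endpoints in $P_A$, and $H(A)=G(A)\cap H$. $H(A)''$ denotes the second derived subgroup $[H(A)',H(A)']$, where $H(A)'=[H(A),H(A)]$. *)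

(* Defs.v *)
From HB Require Import structures.
From mathcomp Require Import all_boot all_order all_algebra.
From mathcomp Require Import reals.
Set Implicit Arguments. Unset Strict Implicit. Unset Printing Implicit Defensive.
Import Order.TTheory GRing.Theory Num.Theory.
Local Open Scope ring_scope.

Section PiecewiseProjective.
Variable R : realType.

(* P^1(R) = R u {oo}: [Some x] is the line through (x,1), [None] is the line
   through the first basis vector e1 = (1,0), i.e. the point oo. *)
Definition P1 := option R.

Definition mob (g : 'M[R]_2) (p : P1) : P1 :=
  let a := g 0 0 in let b := g 0 1 in let c := g 1 0 in let d := g 1 1 in
  match p with
  | Some x => if c * x + d == 0 then None else Some ((a * x + b) / (c * x + d))
  | None => if c == 0 then None else Some (a / c)
  end.

(* Matrices of SL_2(A) (they represent PSL_2(A); +-g act identically). *)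
Definition SL2 (A : {pred R}) (g : 'M[R]_2) : Prop :=
  \det g = 1 /\ forall i j, g i j \in A.

Definition hyperbolic (g : 'M[R]_2) : Prop := 2 < `|\tr g|.

Definition P_ (A : {pred R}) (p : P1) : Prop :=
  exists g, SL2 A g /\ hyperbolic g /\ mob g p = p.

(* Linear order on P1 with oo as maximum; it induces the circular order. *)
Definition lt1 (p q : P1) : bool :=
  match p, q with
  | Some x, Some y => x < y
  | Some _, None => true
  | None, _ => false
  end.
Definition le1 (p q : P1) : bool := (p == q) || lt1 p q.

(* [arc u v w]: w lies on the closed arc of the circle going (positively)
   from u to v; for u = v this is the whole circle. *)
Definition arc (u v w : P1) : bool :=
  if lt1 u v then le1 u w && le1 w v else le1 u w || le1 w v.

(* Either f is globally one
   element of M (no breakpoints), or there are n >= 1 breakpoints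
   p_0 < ... < p_{n-1} (circularly ordered) and f agrees with g_i on the
   closed arc [p_i, p_{i+1 mod n}]. *)
Definition piecewise (M : 'M[R]_2 -> Prop) (B : P1 -> Prop) (f : P1 -> P1) :=
  (exists g, M g /\ forall p, f p = mob g p) \/
  exists s : seq (P1 * 'M[R]_2),
    [/\ (0 < size s)%N, sorted lt1 (map fst s),
        forall i, (i < size s)%N -> B (nth None (map fst s) i)
                                 /\ M (nth 0 (map snd s) i)
      & forall i, (i < size s)%N -> forall w,
          arc (nth None (map fst s) i) (nth None (map fst s) (i.+1 %% size s)) w ->
          f w = mob (nth 0 (map snd s) i) w].

(* Such maps are automatically continuous (the closed pieces agree at
   the breakpoints and Moebius maps are continuous), hence homeomorphisms
   of the circle, so G(A) is a subset of G. *)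
Definition G_ (A : {pred R}) (f : P1 -> P1) : Prop :=
  bijective f /\ piecewise (SL2 A) (P_ A) f.

Definition H_ (A : {pred R}) (f : P1 -> P1) : Prop := G_ A f /\ f None = None.

End PiecewiseProjective.

Inductive gen (T : Type) (X : (T -> T) -> Prop) : (T -> T) -> Prop :=
| gen_id : gen X id
| gen_mul x f : X x -> gen X f -> gen X (x \o f)
| gen_inv x y f : X x -> (forall p, x (y p) = p) -> (forall p, y (x p) = p) ->
    gen X f -> gen X (y \o f).

Definition commutators (T : Type) (X : (T -> T) -> Prop) (f : T -> T) : Prop :=
  exists a b a' b', [/\ X a, X b,
    (forall p, a (a' p) = p) /\ (forall p, a' (a p) = p),
    (forall p, b (b' p) = p) /\ (forall p, b' (b p) = p)
    & f = a' \o b' \o a \o b].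

Definition derived (T : Type) (X : (T -> T) -> Prop) := gen (commutators X).

(* Main.v *)
Require Import Defs.
From mathcomp Require Import all_boot all_order all_algebra reals.
From Stdlib Require List.
From mathcomp Require Import ring lra.
Import Order.TTheory GRing.Theory Num.Theory.
Local Open Scope ring_scope.
Set Implicit Arguments. Unset Strict Implicit.

Lemma det22 (R : comNzRingType) (g : 'M[R]_2) :
  \det g = g 0 0 * g 1 1 - g 0 1 * g 1 0.
Proof.
rewrite (expand_det_row _ 0) !big_ord_recl big_ord0 /cofactor !det_mx11 !mxE /=.
rewrite !expr0 !expr1 /=.
have -> : (lift 0 (0 : 'I_1)) = 1 :> 'I_2 by apply/val_inj.
have -> : (lift 1 (0 : 'I_1)) = 0 :> 'I_2 by apply/val_inj.
have -> : ord0 = 0 :> 'I_2 by [].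
ring.
Qed.

Lemma tr22 (R : comNzRingType) (g : 'M[R]_2) : \tr g = g 0 0 + g 1 1.
Proof.
rewrite /mxtrace !big_ord_recl big_ord0 addr0 /=.
have -> : (lift ord0 (ord0 : 'I_1)) = 1 :> 'I_2 by apply/val_inj.
by [].
Qed.

Lemma ord2P (i : 'I_2) : i = 0 \/ i = 1.
Proof. case: i => [[|[|i]] //] Hi; [left|right]; exact/val_inj. Qed.

Section Germs.
Variable R : realType.

Definition germ (f : P1 R -> P1 R) (a b : R) :=
  exists M : R, forall x, M <= x -> f (Some x) = Some (a * x + b).

Lemma germ_ext f a b a' b' : germ f a b -> a = a' -> b = b' -> germ f a' b'.
Proof. by move=> H <- <-. Qed.

Lemma germ_id : germ id 1 0.
Proof. by exists 0 => x _; rewrite mul1r addr0. Qed.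

Lemma germ_comp f g a1 b1 a2 b2 : 0 < a2 -> germ f a1 b1 -> germ g a2 b2 ->
  germ (f \o g) (a1 * a2) (a1 * b2 + b1).
Proof.
move=> a2p [Mf Hf] [Mg Hg].
pose t := (Mf - b2) / a2.
have ht : a2 * t = Mf - b2 by rewrite /t; field; lra.
exists (`|Mg| + `|t|) => x Hx.
have h1 := ler_norm Mg; have h2 := ler_norm t.
have h3 := normr_ge0 Mg; have h4 := normr_ge0 t.
rewrite /= Hg; last by lra.
rewrite Hf; last by nra.
congr Some; ring.
Qed.

Lemma germ_inv f f' a b : 0 < a -> germ f a b -> (forall p, f' (f p) = p) ->
  germ f' a^-1 (- b / a).
Proof.
move=> ap [M H] K.
exists (a * `|M| + b) => y Hy.
pose x := (y - b) / a.
have hx : a * x + b = y by rewrite /x; field; lra.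
have hM : M <= x.
  have h1 := ler_norm M.
  have : a * `|M| <= a * x by lra.
  by rewrite ler_pM2l //; lra.
have E : Some y = f (Some x) by rewrite H // hx.
by rewrite E K; congr Some; rewrite /x; field; lra.
Qed.

Lemma mob_germ (g : 'M[R]_2) : \det g = 1 -> mob g None = None ->
  exists a b, 0 < a /\ forall x, mob g (Some x) = Some (a * x + b).
Proof.
rewrite det22 /mob => hd.
case: eqP => // c0 _.
rewrite c0 mulr0 subr0 in hd.
have d0 : g 1 1 != 0 by apply/eqP => e; rewrite e mulr0 in hd; lra.
exists (g 0 0 / g 1 1), (g 0 1 / g 1 1); split.
  have e : (g 1 1)^-1 = g 0 0 by rewrite -[g 0 0](mulfK d0) hd mul1r.
  have a0 : g 0 0 != 0 by apply/eqP => e0; rewrite e0 mul0r in hd; lra.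
  by rewrite e -expr2 exprn_even_gt0.
move=> x; rewrite c0 mul0r add0r (negbTE d0); congr Some; by field.
Qed.
End Germs.
Section Arcs.
Variable R : realType.

Lemma lt1_trans : transitive (@lt1 R).
Proof. move=> [y|] [x|] [z|] //=; exact: lt_trans. Qed.

Lemma le1S (a b : R) : le1 (Some a) (Some b) = (a <= b).
Proof. by rewrite /le1 /= le_eqVlt; congr orb; apply/eqP/eqP => [[]|->]. Qed.

Lemma le1N (w : P1 R) : le1 w None.
Proof. by case: w => [a|] //; rewrite /le1 /= orbT. Qed.

Lemma sorted_last2 (l : seq (P1 R)) a b : sorted (@lt1 R) (rcons (rcons l a) b) -> lt1 a b.
Proof.
case: l => [|x t] /=; first by rewrite andbT.
by rewrite rcons_path => /andP[_]; rewrite last_rcons.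
Qed.

Lemma sorted_first (a : P1 R) t z : sorted (@lt1 R) (rcons (a :: t) z) -> lt1 a z.
Proof.
move=> /= /(order_path_min lt1_trans) /allP; apply.
by rewrite mem_rcons mem_head.
Qed.

Lemma arc_right (l : seq (P1 R)) : (0 < size l)%N -> sorted (@lt1 R) l ->
  exists i, (i < size l)%N /\ exists M : R,
    Defs.arc (nth None l i) (nth None l (i.+1 %% size l)) None /\
    forall x, M <= x -> Defs.arc (nth None l i) (nth None l (i.+1 %% size l)) (Some x).
Proof.
case/lastP: l => [//|l z] _.
case: z => [y|] Hs.
  have [y0 [e0 hy0]] : exists y0, nth None (rcons l (Some y)) 0 = Some y0 /\ y0 <= y.
    case: l Hs => [|a t] Hs /=; first by exists y.
    have := sorted_first Hs; case: a {Hs} => [a|] //= hay.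
    by exists a; split => //; apply: ltW.
  exists (size l); rewrite size_rcons ltnSn modnn nth_rcons ltnn eqxx e0; split => //.
  exists (y + 1); rewrite /Defs.arc /= ltNge hy0 /=; split => //.
  by move=> x hx; rewrite le1S; apply/orP; left; lra.
case/lastP: l Hs => [|l z'] Hs.
  exists 0%N; split => //; exists 0; rewrite /=; split => [|x _]; rewrite /Defs.arc /= ?le1N //.
have := sorted_last2 Hs; case: z' Hs => [y|] // Hs _.
exists (size l); rewrite !size_rcons ltnW ?ltnSn //; split => //.
rewrite modn_small // !nth_rcons !size_rcons ltnn eqxx ltnSn ltnn eqxx.
exists (y + 1); rewrite /Defs.arc /=; split; first by rewrite !le1N.
by move=> x hx; rewrite le1S le1N andbT; lra.
Qed.

Lemma H_germ (A : {pred R}) f : H_ A f ->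
  f None = None /\ exists a b, 0 < a /\ germ f a b.
Proof.
case=> [[_ [[g [[hd _] Hf]] | [s [Hs Hso Hbp Harc]]]] Hn]; split => //.
  have hgN : mob g None = None by rewrite -Hf.
  have [a [b [ap Hab]]] := mob_germ hd hgN.
  by exists a, b; split => //; exists 0 => x _; rewrite Hf.
have := @arc_right (map fst s); rewrite size_map => /(_ Hs Hso) [i [hi [M [aN aS]]]].
have [_ [hd _]] := Hbp i hi.
have hgN : mob (nth 0 (map snd s) i) None = None by rewrite -(Harc i hi None aN).
have [a [b [ap Hab]]] := mob_germ hd hgN.
by exists a, b; split => //; exists M => x Hx; rewrite (Harc i hi _ (aS x Hx)).
Qed.
End Arcs.
Section Levels.
Variable R : realType.

Lemma comm1 (X : (P1 R -> P1 R) -> Prop) f :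
  (forall u, X u -> u None = None /\ exists a b, 0 < a /\ germ u a b) ->
  commutators X f -> f None = None /\ exists b, germ f 1 b.
Proof.
move=> HX [a [b [a' [b' [Ha Hb [aa' a'a] [bb' b'b] ->]]]]].
have [aN [al [be [alp Ga]]]] := HX a Ha.
have [bN [ga [de [gap Gb]]]] := HX b Hb.
have a'N : a' None = None by rewrite -{1}aN a'a.
have b'N : b' None = None by rewrite -{1}bN b'b.
split; first by rewrite /= bN aN b'N a'N.
have Ga' := germ_inv alp Ga a'a.
have Gb' := germ_inv gap Gb b'b.
have gip : 0 < ga^-1 by rewrite invr_gt0.
have G1 := germ_comp gip Ga' Gb'.
have G2 := germ_comp alp G1 Ga.
have G3 := germ_comp gap G2 Gb.
eexists; apply: germ_ext G3 _ erefl; field; by rewrite !gt_eqF.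
Qed.

Lemma comm2 (X : (P1 R -> P1 R) -> Prop) f :
  (forall u, X u -> u None = None /\ exists b, germ u 1 b) ->
  commutators X f -> [/\ f None = None, germ f 1 0 & injective f].
Proof.
move=> HX [a [b [a' [b' [Ha Hb [aa' a'a] [bb' b'b] ->]]]]].
have [aN [be Ga]] := HX a Ha.
have [bN [de Gb]] := HX b Hb.
have a'N : a' None = None by rewrite -{1}aN a'a.
have b'N : b' None = None by rewrite -{1}bN b'b.
split; first by rewrite /= bN aN b'N a'N.
  have Ga' := germ_inv ltr01 Ga a'a.
  have Gb' := germ_inv ltr01 Gb b'b.
  rewrite invr1 in Ga' Gb'.
  have G1 := germ_comp ltr01 Ga' Gb'.
  have G2 := germ_comp ltr01 G1 Ga.
  have G3 := germ_comp ltr01 G2 Gb.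
  apply: germ_ext G3 _ _; [by rewrite !mulr1 | ring].
move=> x y /= /(congr1 a); rewrite !aa' => /(congr1 b); rewrite !bb'.
move=> /(congr1 a'); rewrite !a'a => /(congr1 b'); by rewrite !b'b.
Qed.

Lemma lvl1 (A : {pred R}) f : derived (H_ A) f -> f None = None /\ exists b, germ f 1 b.
Proof.
elim=> [|x g Hx _ [gN [b Gb]] | x y g Hx xy yx _ [gN [b Gb]]].
- by split => //; exists 0; exact: germ_id.
- have [xN [c Gc]] := comm1 (@H_germ R A) Hx.
  split; first by rewrite /= gN xN.
  by eexists; apply: germ_ext (germ_comp ltr01 Gc Gb) (mulr1 1) erefl.
- have [xN [c Gc]] := comm1 (@H_germ R A) Hx.
  have yN : y None = None by rewrite -{1}xN yx.
  split; first by rewrite /= gN yN.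
  have Gy := germ_inv ltr01 Gc yx; rewrite invr1 in Gy.
  by eexists; apply: germ_ext (germ_comp ltr01 Gy Gb) (mulr1 1) erefl.
Qed.

Lemma lvl2 (A : {pred R}) f : derived (derived (H_ A)) f ->
  [/\ f None = None, germ f 1 0 & injective f].
Proof.
elim=> [|x g Hx _ [gN Gb gi] | x y g Hx xy yx _ [gN Gb gi]].
- by split => //; exact: germ_id.
- have [xN Gc xi] := comm2 (@lvl1 A) Hx.
  split; first by rewrite /= gN xN.
    by apply: germ_ext (germ_comp ltr01 Gc Gb) (mulr1 1) _; rewrite mulr0 ?addr0 ?oppr0 ?mul0r ?addr0.
  by move=> p q /= /xi /gi.
- have [xN Gc xi] := comm2 (@lvl1 A) Hx.
  have yN : y None = None by rewrite -{1}xN yx.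
  split; first by rewrite /= gN yN.
    have Gy := germ_inv ltr01 Gc yx; rewrite invr1 in Gy.
    by apply: germ_ext (germ_comp ltr01 Gy Gb) (mulr1 1) _; rewrite mulr0 ?addr0 ?oppr0 ?mul0r ?addr0.
  by move=> p q /= /(congr1 x); rewrite !xy => /gi.
Qed.
End Levels.
Section Construction.
Variable R : realType.

Definition Fu (u : R) := (2 * u + 1) / (u + 1).
Definition Fi (u : R) := (u - 1) / (2 - u).

Definition hv (N p q x : R) := if (p <= x) && (x <= q) then N + Fu (x - N) else x.
Definition hiv (N p q x : R) := if (p <= x) && (x <= q) then N + Fi (x - N) else x.
Definition hmap (N p q : R) (w : P1 R) : P1 R :=
  match w with Some x => Some (hv N p q x) | None => None end.
Definition hinv (N p q : R) (w : P1 R) : P1 R :=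
  match w with Some x => Some (hiv N p q x) | None => None end.

Definition gmat (N : R) : 'M[R]_2 :=
  \matrix_(i < 2, j < 2) (if i == 0 then (if j == 0 then 2 + N else 1 - N - N * N)
                          else (if j == 0 then 1 else 1 - N)).

Lemma mob_gmat N x : 0 < x - N + 1 -> mob (gmat N) (Some x) = Some (N + Fu (x - N)).
Proof.
move=> hx; rewrite /mob !mxE /=.
have -> : 1 * x + (1 - N) = x - N + 1 by ring.
rewrite gt_eqF //; congr Some; rewrite /Fu; field.
by rewrite (_ : x - N + 1 = x - N + 1%:R) // gt_eqF.
Qed.

Lemma mob1 (w : P1 R) : mob 1%:M w = w.
Proof.
case: w => [x|]; rewrite /mob !mxE /= ?eqxx //.
rewrite mul0r add0r oner_eq0 mul1r addr0 divr1 //.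
Qed.

Variables pl ph : R.
Hypothesis hpl : pl * pl = pl + 1.
Hypothesis hph : ph * ph = ph + 1.
Hypothesis hpl1 : -1 < pl.
Hypothesis hpl2 : pl < -(1/2).
Hypothesis hph1 : 3/2 < ph.
Hypothesis hph2 : ph < 2.

Ltac gh := have := hpl; have := hph; have := hpl1; have := hpl2; have := hph1;
  have := hph2; move=> ? ? ? ? ? ?.

Lemma Fu_in u : pl <= u <= ph -> pl <= Fu u <= ph.
Proof.
move=> /andP[h1 h2].
gh. have hu : 0 < u + 1 by lra.
have hv0 : Fu u * (u + 1) = 2 * u + 1 by rewrite /Fu mulfVK // gt_eqF.
have e1 : 0 <= (Fu u - pl) * (u + 1) by rewrite mulrBl hv0; nra.
have e2 : 0 <= (ph - Fu u) * (u + 1) by rewrite mulrBl hv0; nra.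
rewrite pmulr_lge0 // in e1; rewrite pmulr_lge0 // in e2.
apply/andP; split; lra.
Qed.

Lemma Fi_in u : pl <= u <= ph -> pl <= Fi u <= ph.
Proof.
move=> /andP[h1 h2]; gh.
have hu : 0 < 2 - u by lra.
have hv0 : Fi u * (2 - u) = u - 1 by rewrite /Fi mulfVK // gt_eqF.
have e1 : 0 <= (Fi u - pl) * (2 - u) by rewrite mulrBl hv0; nra.
have e2 : 0 <= (ph - Fi u) * (2 - u) by rewrite mulrBl hv0; nra.
rewrite pmulr_lge0 // in e1; rewrite pmulr_lge0 // in e2.
apply/andP; split; lra.
Qed.

Lemma FuFi u : pl <= u <= ph -> Fu (Fi u) = u.
Proof.
move=> /andP[h1 h2]; gh.
have hu : 2 - u != 0 by rewrite gt_eqF //; lra.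
rewrite /Fu /Fi; field.
rewrite hu /=.
have -> : u - 1 + (2 - u) = 1 by ring.
exact: oner_neq0.
Qed.

Lemma FiFu u : pl <= u <= ph -> Fi (Fu u) = u.
Proof.
move=> /andP[h1 h2]; gh.
have hu : u + 1 != 0 by rewrite gt_eqF //; lra.
rewrite /Fu /Fi; field.
rewrite hu /=.
have -> : 2 * (u + 1) - (2 * u + 1) = 1 by ring.
exact: oner_neq0.
Qed.

Lemma Fu_pl : Fu pl = pl.
Proof.
gh; have hu : pl + 1 != 0 by rewrite gt_eqF //; lra.
by rewrite /Fu (_ : 2 * pl + 1 = pl * (pl + 1)) ?mulfK //; nra.
Qed.

Lemma Fu_ph : Fu ph = ph.
Proof.
gh; have hu : ph + 1 != 0 by rewrite gt_eqF //; lra.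
by rewrite /Fu (_ : 2 * ph + 1 = ph * (ph + 1)) ?mulfK //; nra.
Qed.
Variable N : R.
Local Notation p := (N + pl).
Local Notation q := (N + ph).

Lemma h_cancel : cancel (hmap N p q) (hinv N p q).
Proof.
gh; case=> [x|] //=; congr Some; rewrite /hv /hiv.
case hx: ((p <= x) && (x <= q)).
  have hu : pl <= x - N <= ph by move/andP: hx => [? ?]; apply/andP; split; lra.
  have /andP[a1 a2] := Fu_in hu.
  rewrite ifT; last by apply/andP; split; lra.
  have -> : N + Fu (x - N) - N = Fu (x - N) by ring.
  by rewrite FiFu //; ring.
by rewrite hx.
Qed.

Lemma h_cancel' : cancel (hinv N p q) (hmap N p q).
Proof.
gh; case=> [x|] //=; congr Some; rewrite /hv /hiv.
case hx: ((p <= x) && (x <= q)).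
  have hu : pl <= x - N <= ph by move/andP: hx => [? ?]; apply/andP; split; lra.
  have /andP[a1 a2] := Fi_in hu.
  rewrite ifT; last by apply/andP; split; lra.
  have -> : N + Fi (x - N) - N = Fi (x - N) by ring.
  by rewrite FuFi //; ring.
by rewrite hx.
Qed.

Lemma hv_ge x : p <= x -> p <= hv N p q x.
Proof.
gh => hx; rewrite /hv; case: ifP => // /andP[h1 h2].
have hu : pl <= x - N <= ph by apply/andP; split; lra.
have /andP[a1 a2] := Fu_in hu; lra.
Qed.

Lemma hv_lt x : x < p -> hv N p q x = x.
Proof. by move=> hx; rewrite /hv ifF //; apply/negbTE; rewrite negb_and -ltNge hx. Qed.

Lemma hv_fix x : (q <= x) || (x <= p) -> hv N p q x = x.
Proof.
gh => hx; rewrite /hv; case: ifP => // /andP[h1 h2].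
case/orP: hx => hx.
  have -> : x = q by lra.
  by rewrite (_ : q - N = ph) ?Fu_ph //; ring.
have -> : x = p by lra.
by rewrite (_ : p - N = pl) ?Fu_pl //; ring.
Qed.

Lemma h_moves : hv N p q (N + 1/2) <> N + 1/2.
Proof.
gh; rewrite /hv ifT; last by apply/andP; split; lra.
have -> : N + 1/2 - N = 1/2 by ring.
rewrite /Fu (_ : (2 * (1/2) + 1) / (1/2 + 1) = 4/3 :> R); last by field.
move=> E; lra.
Qed.

Lemma h_H (A : {pred R}) (hA : GRing.subring_closed A) (n : nat) (eN : N = n%:R) :
  H_ A (hmap N p q).
Proof.
gh; case: hA => h1 hB hM.
have h0 : 0 \in A by rewrite -(subrr 1) hB.
have hD : forall a b, a \in A -> b \in A -> a + b \in A.
  move=> a b ha hb; rewrite (_ : a + b = a - (0 - b)); last by ring.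
  exact: (hB _ _ ha (hB _ _ h0 hb)).
have hn : forall k : nat, k%:R \in A.
  by elim => // k IH; rewrite -addn1 natrD; apply: hD.
have NA : N \in A by rewrite eN.
have gA : SL2 A (gmat N).
  split; first by rewrite det22 !mxE /=; ring.
  move=> i j; case: (ord2P i) => ->; case: (ord2P j) => ->; rewrite mxE /=.
  - exact: hD _ _ (hn 2%N) NA.
  - exact: hB _ _ (hB _ _ h1 NA) (hM _ _ NA NA).
  - exact: h1.
  - exact: hB _ _ h1 NA.
have IA : SL2 A 1%:M.
  split; first by rewrite det1.
  by move=> i j; rewrite mxE; case: (i == j).
have pq : p < q by lra.
split; last by [].
split; first by exists (hinv N p q); [exact: h_cancel | exact: h_cancel'].
right; exists [:: (Some p, gmat N); (Some q, 1%:M)]; split => //=.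
- by rewrite pq.
- move=> [|[|i]] // _; split => //.
  + exists (gmat N); split => //; split.
      by rewrite /hyperbolic tr22 !mxE /= (_ : 2 + N + (1 - N) = 3) ?ger0_norm; lra.
    rewrite mob_gmat; last by lra.
    by congr Some; rewrite (_ : N + pl - N = pl) ?Fu_pl //; ring.
  + exists (gmat N); split => //; split.
      by rewrite /hyperbolic tr22 !mxE /= (_ : 2 + N + (1 - N) = 3) ?ger0_norm; lra.
    rewrite mob_gmat; last by lra.
    by congr Some; rewrite (_ : N + ph - N = ph) ?Fu_ph //; ring.
- move=> [|[|i]] // _ w.
  + rewrite /Defs.arc /= pq; case: w => [x|]; last by [].
    rewrite !le1S => hx; rewrite mob_gmat /=; last by case/andP: hx; lra.
    by rewrite /hv hx.
  + rewrite /Defs.arc /= ltNge (ltW pq) /=.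
    rewrite mob1; case: w => [x|] //.
    by rewrite !le1S /= => hx; rewrite hv_fix.
Qed.

End Construction.

Unset Implicit Arguments.
Theorem proposition7 (R : realType) (A : {pred R}) (hA : subring_closed A)
  (S : seq (P1 R -> P1 R)) :
  (forall s, List.In s S -> derived (derived (H_ A)) s) ->
  exists h : P1 R -> P1 R,
    [/\ H_ A h, (exists p, h p <> p)
      & forall s, List.In s S -> forall p, h (s p) = s (h p)].
Proof.
move=> HS.
have [M HM] : exists M : R, forall s, List.In s S -> forall x, M <= x -> s (Some x) = Some x.
  elim: S HS => [|s0 S IH] HS; first by exists 0.
  have [M1 H1] := IH (fun s h => HS s (or_intror h)).
  have [_ [M2 H2] _] := lvl2 (HS s0 (or_introl erefl)).
  have n1 := ler_norm M1; have n2 := ler_norm M2.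
  have n3 := normr_ge0 M1; have n4 := normr_ge0 M2.
  exists (`|M1| + `|M2|) => s [<-|hs] x hx.
    by rewrite H2 ?mul1r ?addr0 //; lra.
  by apply: H1 => //; lra.
pose r := Num.sqrt (5 : R).
have hr2 : r * r = 5 by rewrite -expr2 sqr_sqrtr.
have hr0 : 0 <= r by apply: sqrtr_ge0.
have r2 : 2 < r by nra.
have r3 : r < 3 by nra.
pose pl := (1 - r) / 2; pose ph := (1 + r) / 2.
have hpl : pl * pl = pl + 1.
  apply/eqP; rewrite -subr_eq0 (_ : _ - _ = (r * r - 5) / 4); last by rewrite /pl; field.
  by rewrite hr2 subrr mul0r.
have hph : ph * ph = ph + 1.
  apply/eqP; rewrite -subr_eq0 (_ : _ - _ = (r * r - 5) / 4); last by rewrite /ph; field.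
  by rewrite hr2 subrr mul0r.
have hpl1 : -1 < pl by rewrite /pl; lra.
have hpl2 : pl < -(1/2) by rewrite /pl; lra.
have hph1 : 3/2 < ph by rewrite /ph; lra.
have hph2 : ph < 2 by rewrite /ph; lra.
have hM0 : 0 <= `|M| + 1 by have := normr_ge0 M; lra.
have hn := archi_boundP hM0.
set n := Num.Def.archi_bound _ in hn.
pose N : R := n%:R.
have hMN : M < N + pl by have := ler_norm M; rewrite /N; lra.
exists (hmap N (N + pl) (N + ph)); split.
- exact: (h_H hpl hph hpl1 hpl2 hph1 hph2 hA (erefl N)).
- exists (Some (N + 1/2)) => /= [[]].
  exact: (h_moves hpl hph hpl1 hpl2 hph1 hph2).
move=> s Hs [x|]; last first.
  by have [sN _ _] := lvl2 (HS s Hs); rewrite /= sN.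
have [sN _ sinj] := lvl2 (HS s Hs).
have Hge : forall y, M <= y -> M <= hv N (N + pl) (N + ph) y.
  move=> y hy; case: (ltP y (N + pl)) => hy'.
    by rewrite hv_lt.
  have := hv_ge hpl hph hpl1 hpl2 hph1 hph2 hy'; lra.
case: (leP M x) => hx.
  by rewrite (HM s Hs x hx) /= (HM s Hs _ (Hge _ hx)).
rewrite /= hv_lt; last by lra.
case E: (s (Some x)) => [z|]; last by rewrite -sN in E; have := sinj _ _ E.
case: (leP M z) => hz.
  have e := HM s Hs z hz.
  by have := sinj _ _ (etrans e (esym E)) => -[ez]; exfalso; clear -ez hz hx; lra.
by rewrite /= hv_lt //; clear -hz hMN; lra.
Qed.
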